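(* Let a constant $\lambda>0$ and a function $\ell=\ell(n)=o(\log n)$ be given. If $n$ is large enough then, whenever $E_0$, $E_1$ and $\{e\}$ are disjoint sets of possible edges of $\tilde G=\tilde G(n,\ell,\lambda)$ with $|E_1|\le n^{1/3}$ such that $E_1\cup\{e\}$ contains no cycle of length at most $\ell$, we have \[ (1-n^{-1/4})\lambda/n\ \le\ \Pr\bigl(e\in E(\tilde G)\ \big|\ E_1\subset E(\tilde G)\subset E_0^{c}\bigr)\ \le\ \lambda/n . \]
   Context: $G(n,p)$ is the Erdős–Rényi random graph on vertex set $[n]$ with each possible edge present independently with probability $p$. $\tilde G(n,\ell,\lambda)$ is the random graph whose distribution is that of $G(n,\lambda/n)$ conditioned on containing no cycle of length at most $\ell$. $E_0^{c}$ denotes the complement of $E_0$ in the set of all possible edges. *)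

(* Defs.v *)
From HB Require Import structures.
From mathcomp Require Import all_boot all_order all_algebra.
From mathcomp Require Import all_classical all_reals all_analysis.
Set Implicit Arguments. Unset Strict Implicit. Unset Printing Implicit Defensive.
Import Order.TTheory GRing.Theory Num.Theory.
Local Open Scope ring_scope.

(* Possible edges of a graph on vertex set [n] = 'I_n: unordered pairs {u,v},
   u <> v, encoded as ordered pairs (u,v) with u < v. *)
Notation edge n := {x : 'I_n * 'I_n | (x.1 < x.2)%N}.

Definition adj n (G : {set edge n}) (u v : 'I_n) : bool :=
  [exists x in G, (val x == (u, v)) || (val x == (v, u))].

Definition has_short_cycle n (l : nat) (G : {set edge n}) : bool :=
  [exists k : 'I_l.+1, (3 <= k)%N &&
    [exists f : {ffun 'I_k -> 'I_n},
       injectiveb f && [forall i : 'I_k, adj G (f i) (f (ordS i))]]].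

Definition gnp_weight (R : realType) n (p : R) (G : {set edge n}) : R :=
  p ^+ #|G| * (1 - p) ^+ (#|[set: edge n]| - #|G|)%N.

Definition gtilde_prob (R : realType) n (l : nat) (lam : R)
    (A : pred {set edge n}) : R :=
  (\sum_(G : {set edge n} | A G && ~~ has_short_cycle l G)
      gnp_weight (lam / n%:R) G) /
  (\sum_(G : {set edge n} | ~~ has_short_cycle l G) gnp_weight (lam / n%:R) G).

Definition gtilde_cond (R : realType) n (l : nat) (lam : R)
    (A B : pred {set edge n}) : R :=
  gtilde_prob l lam (predI A B) / gtilde_prob l lam B.

(* Main.v *)
Require Import Defs.
From mathcomp Require Import zify ring lra.
From HB Require Import structures.
From mathcomp Require Import all_boot all_order all_algebra.
From mathcomp Require Import all_classical all_reals all_analysis.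
Import Order.TTheory GRing.Theory Num.Theory.
Local Open Scope ring_scope.
Set Implicit Arguments. Unset Strict Implicit. Unset Printing Implicit Defensive.
Local Notation fsubsetP := fintype.subsetP.
Definition ends n (x : edge n) (a b : 'I_n) := (val x == (a,b)) || (val x == (b,a)).

Lemma adjP n (G : {set edge n}) (a b : 'I_n) :
  reflect (exists2 x, x \in G & ends x a b) (adj G a b).
Proof.
apply: (iffP existsP) => [[x /andP[xG xe]]|[x xG xe]]; exists x => //.
by rewrite xG.
Qed.

Lemma adj_sub n (G H : {set edge n}) (a b : 'I_n) :
  G \subset H -> adj G a b -> adj H a b.
Proof. by move=> /fsubsetP sGH /adjP[x /sGH xH xe]; apply/adjP; exists x. Qed.

Lemma hsc_sub n l (G H : {set edge n}) :
  G \subset H -> has_short_cycle l G -> has_short_cycle l H.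
Proof.
move=> sGH /existsP[k /andP[k3 /existsP[f /andP[finj /forallP fa]]]].
apply/existsP; exists k; rewrite k3; apply/existsP; exists f; rewrite finj.
by apply/forallP=> i; apply: adj_sub sGH (fa i).
Qed.

Lemma ends_uniq n (x y : edge n) (a b : 'I_n) : ends x a b -> ends y a b -> x = y.
Proof.
move=> hx hy; apply: val_inj.
have lx := valP x; have ly := valP y.
move: hx hy lx ly; rewrite /ends.
case: (val x) => x1 x2; case: (val y) => y1 y2 /=.
case/orP => /eqP[-> ->]; case/orP => /eqP[-> ->] //= h1 h2;
  by have := ltn_trans h1 h2; rewrite ltnn.
Qed.

Lemma adjU1 n (e : edge n) (G : {set edge n}) (a b : 'I_n) : adj (e |: G) a b = ends e a b || adj G a b.
Proof.
apply/adjP/orP => [[x /setU1P[->|xG] xe]|[ee|/adjP[x xG xe]]]; first by left.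
- by right; apply/adjP; exists x.
- by exists e; rewrite ?setU11.
- by exists x; rewrite ?setU1r.
Qed.

Lemma w_union (R : realType) n (p : R) (H F : {set edge n}) : p != 1 ->
  [disjoint H & F] ->
  gnp_weight p (H :|: F) = (p / (1-p)) ^+ #|F| * gnp_weight p H.
Proof.
move=> p1 dHF; rewrite /gnp_weight.
have cU : #|H :|: F| = (#|H| + #|F|)%N.
  by rewrite cardsU (disjoint_setI0 dHF) cards0 subn0.
have le : (#|H| + #|F| <= #|[set: edge n]|)%N.
  by rewrite -cU subset_leq_card // subsetT.
rewrite cU exprD.
set N := #|[set: edge n]|.
have -> : (N - #|H|)%N = (N - (#|H| + #|F|) + #|F|)%N by lia.
rewrite exprD expr_div_n.
have q0 : (1 - p) ^+ #|F| != 0 by rewrite expf_neq0 // subr_eq0 eq_sym.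
move: q0; set A := p ^+ #|H|; set B := p ^+ #|F|; set D := (1 - p) ^+ #|F|.
set C := (1 - p) ^+ _ => q0.
by field.
Qed.

Lemma w_ge0 (R : realType) n (p : R) (G : {set edge n}) : 0 <= p <= 1 ->
  0 <= gnp_weight p G.
Proof. by case/andP=> p0 p1; rewrite /gnp_weight mulr_ge0 // exprn_ge0 // subr_ge0. Qed.

Lemma w_gt0 (R : realType) n (p : R) (G : {set edge n}) : 0 < p < 1 ->
  0 < gnp_weight p G.
Proof. by case/andP=> p0 p1; rewrite /gnp_weight mulr_gt0 // exprn_gt0 // subr_gt0. Qed.

Lemma sum_super (R : realType) n (p : R) (Q : pred {set edge n})
    (F : {set edge n}) : p != 1 ->
  \sum_(G | Q G && (F \subset G)) gnp_weight p G =
  (p/(1-p))^+#|F| * \sum_(H | Q (H :|: F) && [disjoint H & F]) gnp_weight p H.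
Proof.
move=> p1.
rewrite (reindex_onto (fun H => H :|: F) (fun G => G :\: F)) /=; last first.
  move=> G /andP[_ /fsubsetP sFG]; apply/setP => x; rewrite !inE.
  by have := sFG x; case: (x \in F); case: (x \in G) => //= /(_ isT).
rewrite big_distrr /=; apply: eq_big => H.
  rewrite finset.subsetUr andbT; congr (_ && _).
  rewrite finset.setDUl finset.setDv finset.setU0; apply/eqP/finset.setDidPl => //.
move=> /andP[_ /eqP dH]; rewrite w_union //; apply/finset.setDidPl.
by rewrite finset.setDUl finset.setDv finset.setU0 in dH.
Qed.

Lemma iter_ordS k (i : 'I_k) t : val (iter t (@ordS k) i) = ((i + t) %% k)%N.
Proof.
elim: t => [|t IH] /=; first by rewrite addn0 modn_small.
by rewrite IH -addn1 modnDml addn1 addnS.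
Qed.

Lemma cyc_exit k (T : {set 'I_k}) (i j : 'I_k) : i \in T -> j \notin T ->
  [exists i', (i' \in T) && (ordS i' \notin T)].
Proof.
move=> iT jT; case: (boolP [exists i', (i' \in T) && (ordS i' \notin T)]) => // /existsPn H; exfalso.
have H' i' : i' \in T -> ordS i' \in T.
  by move=> i'T; have := H i'; rewrite i'T /= negbK.
have It t : iter t (@ordS k) i \in T by elim: t => //= t IH; apply: H'.
have ej : j = iter (j + k - i) (@ordS k) i.
  apply: val_inj; rewrite iter_ordS.
  have -> : (i + (j + k - i) = j + k)%N by have := ltn_ord i; lia.
  by rewrite modnDr modn_small.
by move: jT; rewrite ej It.
Qed.

Lemma ordSS k (j : 'I_k) : (2 < k)%N -> ordS (ordS j) != j.
Proof.
move=> k3; apply/negP => /eqP /(congr1 val).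
have -> : ordS (ordS j) = iter 2 (@ordS k) j by [].
rewrite iter_ordS => h0; have h : ((j + 2) %% k = nat_of_ord j)%N := h0.
have jk := ltn_ord j.
have [lt|ge] := ltnP (j + 2) k.
  by move: h; rewrite modn_small //; lia.
have e : (j + 2 = (j + 2 - k) + k)%N by lia.
by move: h; rewrite e modnDr modn_small; lia.
Qed.

Lemma prod_constP (R : comNzRingType) (I : finType) (P : pred I) (c : R) :
  \prod_(i | P i) c = c ^+ #|[set i | P i]|.
Proof. by rewrite -prodr_const; apply: eq_bigl => i; rewrite inE. Qed.

Lemma cyc_prod (R : realType) k (T : {set 'I_k}) (a bw q : R) :
  0 <= q -> 0 < a -> 0 <= bw -> bw ^+ 2 <= a ->
  [exists i, (i \in T) && (ordS i \notin T)] ->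
  q ^+ #|T| * \prod_(i < k) (if (ord_pred i \in T) && (i \in T) then a
        else if (ord_pred i \in T) || (i \in T) then bw else 1)
   <= (bw ^+ 2 / a) * (a * q) ^+ #|T|.
Proof.
move=> q0 a0 bw0 bwa /existsP[i0 /andP[i0T i0T']].
set c11 := #|[set i | (ord_pred i \in T) && (i \in T)]|.
set c10 := #|[set i | (ord_pred i \in T) && (i \notin T)]|.
set c01 := #|[set i | (ord_pred i \notin T) && (i \in T)]|.
have eA : #|T| = (c11 + c01)%N.
  rewrite -(cardsID [set i | ord_pred i \in T] T); congr (_ + _)%N;
    by apply: eq_card => i; rewrite !inE andbC.
have eB : #|T| = (c11 + c10)%N.
  rewrite -(card_preimset T (@ord_pred_inj k)).
  rewrite -(cardsID T (@ord_pred k @^-1: T)); congr (_ + _)%N;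
    by apply: eq_card => i; rewrite !inE andbC.
have r1 : (0 < c10)%N.
  apply/card_gt0P; exists (ordS i0); rewrite !inE ordSK i0T /=; exact: i0T'.
have e10 : c01 = c10 by lia.
have eP : \prod_(i < k) (if (ord_pred i \in T) && (i \in T) then a
        else if (ord_pred i \in T) || (i \in T) then bw else 1)
        = a ^+ c11 * bw ^+ c10 * bw ^+ c01.
  rewrite (bigID (fun i => ord_pred i \in T)) /=.
  rewrite (bigID (fun i => i \in T)) /= [X in _ * X](bigID (fun i => i \in T)) /=.
  rewrite (eq_bigr (fun=> a)); last by move=> i /andP[-> ->].
  rewrite [X in _ * X * _](eq_bigr (fun=> bw)); last by move=> i /andP[-> /negbTE ->].
  rewrite [X in _ * (X * _)](eq_bigr (fun=> bw)); last by move=> i /andP[/negbTE -> ->].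
  rewrite [X in _ * (_ * X)](eq_bigr (fun=> 1)); last by move=> i /andP[/negbTE -> /negbTE ->].
  rewrite !prod_constP expr1n mulr1 -mulrA; congr (_ * (_ * _)); congr (_ ^+ _);
    apply: eq_card => i; rewrite !inE //.
rewrite eP.
have K0 : 0 <= bw ^+ 2 / a by rewrite divr_ge0 ?exprn_ge0 // ltW.
have K1 : bw ^+ 2 / a <= 1 by rewrite ler_pdivrMr // mul1r.
have hk : (bw ^+ 2 / a) ^+ c10 <= bw ^+ 2 / a.
  have [r ->] : exists r, c10 = r.+1 by exists c10.-1; lia.
  by rewrite exprS -[X in _ <= X]mulr1 ler_wpM2l // exprn_ile1.
have -> : q ^+ #|T| * (a ^+ c11 * bw ^+ c10 * bw ^+ c01)
   = (bw ^+ 2 / a) ^+ c10 * (a * q) ^+ #|T|.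
  rewrite eB e10 !exprMn !exprD exprVn.
  have an : a ^+ c10 != 0 by rewrite expf_neq0 // gt_eqF.
  move: an; set Q1 := q ^+ c11; set Q2 := q ^+ c10; set A1 := a ^+ c11.
  set A2 := a ^+ c10; set B := bw ^+ c10 => an.
  by field.
by rewrite ler_wpM2r // exprn_ge0 // mulr_ge0 // ltW.
Qed.

Definition Wset n (e : edge n) (E1 : {set edge n}) : {set 'I_n} :=
  [set a | [exists x in e |: E1, ((val x).1 == a) || ((val x).2 == a)]].

Definition Aset n (u : 'I_n) (W : {set 'I_n}) k (T : {set 'I_k}) (i : 'I_k)
  : {set 'I_n} :=
  if (ord_pred i \in T) && (i \in T) then [set: 'I_n]
  else if (ord_pred i \in T) || (i \in T) then W else [set u].

Definition Fset n k (T : {set 'I_k}) (h : {ffun 'I_k -> 'I_n}) : {set edge n} :=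
  [set x | [exists i in T, ends x (h i) (h (ordS i))]].

Lemma ends_same n (x : edge n) (a b c d : 'I_n) : ends x a b -> ends x c d ->
  (a = c /\ b = d) \/ (a = d /\ b = c).
Proof.
rewrite /ends; case: (val x) => x1 x2.
by case/orP => /eqP[<- <-]; case/orP => /eqP[-> ->]; auto.
Qed.

Lemma ends_W n (e : edge n) E1 x (a b : 'I_n) : x \in e |: E1 -> ends x a b ->
  (a \in Wset e E1) && (b \in Wset e E1).
Proof.
move=> xS; rewrite /ends /Wset !inE.
case/orP => /eqP ex; apply/andP; split; apply/existsP; exists x;
  by rewrite xS ex ?eqxx ?orbT.
Qed.

Lemma bad_code n l (E1 G : {set edge n}) (e : edge n) :
  ~~ has_short_cycle l G -> ~~ has_short_cycle l (e |: E1) -> e \notin G ->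
  has_short_cycle l (e |: G) ->
  exists k : 'I_l.+1, exists T : {set 'I_k}, exists h : {ffun 'I_k -> 'I_n},
    [&& [exists i, (i \in T) && (ordS i \notin T)],
        h \in family (Aset (val e).1 (Wset e E1) T),
        (#|T| <= #|Fset T h|)%N,
        [disjoint Fset T h & E1] &
        Fset T h \subset G].
Proof.
move=> nG nE1 eG /existsP[k /andP[k3 /existsP[f /andP[fi /forallP fa]]]].
have finj := injectiveP _ fi.
exists k.
set T := [set i | ~~ adj (e |: E1) (f i) (f (ordS i))].
set h := [ffun i => if (i \in T) || (ord_pred i \in T) then f i else (val e).1].
exists T; exists h.
have adjG i : i \in T -> exists2 x, x \in G & ends x (f i) (f (ordS i)).
  rewrite inE adjU1 negb_or => /andP[ne _].
  have := fa i; rewrite adjU1 (negbTE ne) /= => /adjP[x xG xe]; by exists x.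
have nT i : i \notin T -> (f i \in Wset e E1) && (f (ordS i) \in Wset e E1).
  rewrite inE negbK => /adjP[x xS xe]; exact: ends_W xS xe.
have hT i : i \in T -> h i = f i /\ h (ordS i) = f (ordS i).
  by move=> iT; rewrite !ffunE iT ordSK iT orbT.
have [i1 i1T] : exists i, i \in T.
  case: (boolP [exists i, i \in T]) => [/existsP //|/existsPn hn].
  move/negP: nE1 => nE1; exfalso; apply: nE1.
  apply/existsP; exists k; rewrite k3; apply/existsP; exists f; rewrite fi.
  by apply/forallP => i; have := hn i; rewrite inE negbK.
have [i2 i2T] : exists i, i \notin T.
  case: (boolP [exists i, i \notin T]) => [/existsP //|/existsPn hn].
  move/negP: nG => nG; exfalso; apply: nG.
  apply/existsP; exists k; rewrite k3; apply/existsP; exists f; rewrite fi.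
  apply/forallP => i; have := hn i; rewrite negbK => /adjG[x xG xe].
  by apply/adjP; exists x.
apply/and5P; split.
- exact: cyc_exit i1T i2T.
- apply/familyP => i; rewrite /Aset ffunE.
  case pT: (ord_pred i \in T); case iT: (i \in T) => /=.
  + by rewrite inE.
  + by have := nT i (negbT iT); case/andP.
  + have := nT (ord_pred i) (negbT pT); rewrite ord_predK; by case/andP.
  + by rewrite inE.
- pose g i := odflt e [pick x in G | ends x (f i) (f (ordS i))].
  have gP i : i \in T -> (g i \in G) && ends (g i) (f i) (f (ordS i)).
    move=> iT; rewrite /g; case: pickP => [x /andP[-> ->] //|].
    by case: (adjG i iT) => x xG xe /(_ x); rewrite xG xe.
  have -> : #|T| = #|g @: T|.
    apply/esym/card_in_imset => i j iT jT eg.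
    case/andP: (gP i iT) => _ ei; case/andP: (gP j jT) => _; rewrite -eg => ej.
    case: (ends_same ei ej) => [[/finj -> //]|[e1 e2]].
    move/finj: e1 => e1; move/finj: e2 => e2.
    have := ordSS j k3; by rewrite -e1 e2 eqxx.
  apply: subset_leq_card; apply/fsubsetP => x /imsetP[i iT ->].
  rewrite inE; apply/existsP; exists i; rewrite iT /=.
  by case: (hT i iT) => -> ->; case/andP: (gP i iT).
- rewrite -setI_eq0; apply/eqP/setP => x; rewrite !inE; apply/negP.
  case/andP => /existsP[i /andP[iT xe]] xE1.
  have := iT; rewrite inE adjU1 negb_or => /andP[_ /negP]; apply.
  apply/adjP; exists x => //; by case: (hT i iT) xe => -> ->.
- apply/fsubsetP => x; rewrite inE => /existsP[i /andP[iT xe]].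
  case: (hT i iT) xe => -> -> xe.
  by case: (adjG i iT) => y yG ye; rewrite (ends_uniq xe ye).
Qed.

Lemma le_sum_term (R : realType) (I : finType) (i0 : I) (P : pred I) (F : I -> R) :
  P i0 -> (forall i, P i -> 0 <= F i) -> F i0 <= \sum_(i | P i) F i.
Proof.
move=> Pi0 F0; rewrite (bigD1 i0) //= lerDl sumr_ge0 // => i /andP[Pi _].
exact: F0.
Qed.

Definition Om n l (E0 E1 : {set edge n}) (e : edge n) (G : {set edge n}) :=
  [&& E1 \subset G, G \subset ~: E0, ~~ has_short_cycle l G & e \notin G].

Definition valid n (e : edge n) (E1 : {set edge n}) k (T : {set 'I_k})
  (h : {ffun 'I_k -> 'I_n}) :=
  [&& [exists i, (i \in T) && (ordS i \notin T)],
      h \in family (Aset (val e).1 (Wset e E1) T),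
      (#|T| <= #|Fset T h|)%N &
      [disjoint Fset T h & E1]].

Lemma Om_sub n l (E0 E1 : {set edge n}) (e : edge n) (H F : {set edge n}) :
  [disjoint F & E1] -> Om l E0 E1 e (H :|: F) -> Om l E0 E1 e H.
Proof.
move=> dF /and4P[s1 s2 s3 s4]; apply/and4P; split.
- apply/fsubsetP => x xE1; have := fsubsetP s1 x xE1; rewrite inE => /orP[//|xF].
  by move: dF; rewrite -setI_eq0 => /eqP /setP /(_ x); rewrite !inE xF xE1.
- apply: fintype.subset_trans s2; exact: finset.subsetUl.
- apply: contra s3; apply: hsc_sub; exact: finset.subsetUl.
- by apply: contra s4; rewrite inE => ->.
Qed.

Lemma sum_mono_pred (R : realType) (I : finType) (P Q : pred I) (F : I -> R) :
  (forall i, P i -> Q i) -> (forall i, Q i -> 0 <= F i) ->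
  \sum_(i | P i) F i <= \sum_(i | Q i) F i.
Proof.
move=> PQ F0; rewrite [X in _ <= X](bigID P) /=.
rewrite (eq_bigl P); last by move=> i; case Pi: (P i); rewrite ?andbT ?andbF ?PQ.
rewrite lerDl sumr_ge0 // => i /andP[Qi _]; exact: F0.
Qed.

Lemma code_term (R : realType) n l (p : R) (E0 E1 : {set edge n}) (e : edge n)
    k (T : {set 'I_k}) (h : {ffun 'I_k -> 'I_n}) :
  0 <= p <= 2^-1 -> valid e E1 T h ->
  \sum_(G | Om l E0 E1 e G && (Fset T h \subset G)) gnp_weight p G <=
  (p / (1 - p)) ^+ #|T| * \sum_(G | Om l E0 E1 e G) gnp_weight p G.
Proof.
move=> /andP[p0 p2] /and4P[_ _ cT dF].
have p1 : p != 1 by apply/negP => /eqP p1; move: p2; rewrite p1; lra.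
have q0 : 0 <= p / (1 - p) by rewrite divr_ge0 // subr_ge0; lra.
have q1 : p / (1 - p) <= 1 by rewrite ler_pdivrMr ?subr_gt0; lra.
have S0 : 0 <= \sum_(G | Om l E0 E1 e G) gnp_weight p G.
  by apply: sumr_ge0 => G _; apply: w_ge0; rewrite p0 /=; lra.
rewrite sum_super //.
apply: le_trans (_ : (p / (1 - p)) ^+ #|Fset T h| *
     \sum_(G | Om l E0 E1 e G) gnp_weight p G <= _); last first.
  by apply: ler_wpM2r => //; apply: ler_wiXn2l.
apply: ler_wpM2l; first exact: exprn_ge0.
apply: sum_mono_pred => [H /andP[oH _]|H _]; first exact: Om_sub oH.
by apply: w_ge0; rewrite p0 /=; lra.
Qed.

Lemma sum_family (R : realType) k n (A : 'I_k -> {set 'I_n}) (c : R) :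
  \sum_(h : {ffun 'I_k -> 'I_n}) (if h \in family A then c else 0)
  = c * \prod_(i < k) #|A i|%:R.
Proof.
have -> : \prod_(i < k) (#|A i|%:R : R) = \prod_(i < k) \sum_(j | j \in A i) 1.
  by apply: eq_bigr => i _; rewrite sumr_const.
rewrite bigA_distr_big_dep /= -big_mkcond /= mulr_sumr.
by apply: eq_bigr => h _; rewrite prodr_const expr1n mulr1.
Qed.

Lemma le_sum_termW (R : realType) (I : finType) (i0 : I) (P : pred I) (F : I -> R) x :
  x <= F i0 -> P i0 -> (forall i, P i -> 0 <= F i) -> x <= \sum_(i | P i) F i.
Proof. by move=> xF Pi0 F0; apply: le_trans xF (le_sum_term Pi0 F0). Qed.

Lemma bad_bound (R : realType) n l (p : R) (E0 E1 : {set edge n}) (e : edge n) :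
  0 <= p <= 2^-1 -> ~~ has_short_cycle l (e |: E1) ->
  \sum_(G | Om l E0 E1 e G && has_short_cycle l (e |: G)) gnp_weight p G <=
  (\sum_(G | Om l E0 E1 e G) gnp_weight p G) *
  \sum_(k < l.+1) \sum_(T : {set 'I_k})
     (if [exists i, (i \in T) && (ordS i \notin T)] then
        (p/(1-p)) ^+ #|T| * \prod_(i < k) #|Aset (val e).1 (Wset e E1) T i|%:R
      else 0).
Proof.
move=> p02 nE1.
have w0 (G : {set edge n}) : 0 <= gnp_weight p G by apply: w_ge0; case/andP: p02 => p0 p2; rewrite p0 /=; lra.
set S := \sum_(G | Om l E0 E1 e G) gnp_weight p G.
have S0 : 0 <= S by apply: sumr_ge0.
pose J (k : 'I_l.+1) (T : {set 'I_k}) (h : {ffun 'I_k -> 'I_n}) (G : {set edge n}) :=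
  if valid e E1 T h && (Fset T h \subset G) && Om l E0 E1 e G
  then gnp_weight p G else 0.
have J0 k T h G : 0 <= J k T h G by rewrite /J; case: ifP.
apply: le_trans (_ : _ <= \sum_(G | Om l E0 E1 e G && has_short_cycle l (e |: G))
   \sum_(k < l.+1) \sum_(T : {set 'I_k}) \sum_(h : {ffun 'I_k -> 'I_n}) J k T h G) _.
  apply: ler_sum => G /andP[oG hG]; have := oG; case/and4P => E1G GE0 nG eG.
  have [k [T [h /and5P[c1 c2 c3 c4 c5]]]] := bad_code nG nE1 eG hG.
  apply: (le_sum_termW (i0 := k)) => //; last first.
    by move=> *; do 2 (apply: sumr_ge0 => * ).
  apply: (le_sum_termW (i0 := T)) => //; last first.
    by move=> *; apply: sumr_ge0 => *.
  apply: (le_sum_termW (i0 := h)) => //.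
  by rewrite /J /valid c1 c2 c3 c4 c5 oG.
apply: le_trans (_ : _ <= \sum_G
   \sum_(k < l.+1) \sum_(T : {set 'I_k}) \sum_(h : {ffun 'I_k -> 'I_n}) J k T h G) _.
  apply: sum_mono_pred => // G _; do 3 (apply: sumr_ge0 => * ); done.
rewrite exchange_big /= mulr_sumr; apply: ler_sum => k _.
rewrite exchange_big /= mulr_sumr; apply: ler_sum => T _.
rewrite exchange_big /=.
case: (boolP [exists i, (i \in T) && (ordS i \notin T)]) => ex; last first.
  rewrite mulr0 big1 // => h _; rewrite big1 // => G _.
  by rewrite /J /valid (negbTE ex).
apply: le_trans (_ : _ <= \sum_(h : {ffun 'I_k -> 'I_n})
   (if h \in family (Aset (val e).1 (Wset e E1) T) then
      (p / (1 - p)) ^+ #|T| * S else 0)) _; last first.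
  by rewrite sum_family mulrCA mulrA.
apply: ler_sum => h _.
case vh: (valid e E1 T h); last first.
  rewrite big1; first by case: ifP => // _; rewrite mulr_ge0 // exprn_ge0 //
    divr_ge0 ?subr_ge0; case/andP: p02 => p0 p2 //; lra.
  by move=> G _; rewrite /J vh.
have := vh; case/and4P => _ -> _ _.
apply: le_trans _ (code_term l E0 p02 vh).
rewrite [X in _ <= X]big_mkcond /=; apply: ler_sum => G _.
by rewrite /J vh /= andbC; case: ifP.
Qed.

Lemma sum_pow_sets (R : realType) k (x : R) :
  \sum_(T : {set 'I_k}) x ^+ #|T| = (x + 1) ^+ k.
Proof.
have -> : (x + 1) ^+ k = \prod_(i < k) (x + 1) by rewrite prodr_const card_ord.
rewrite bigA_distr; apply: eq_bigr => T _.
by rewrite -big_mkcond /= prodr_const.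
Qed.

Lemma count_bound (R : realType) n l (q : R) (u : 'I_n) (W : {set 'I_n}) :
  0 <= q -> (0 < n)%N -> (#|W|%:R : R) ^+ 2 <= n%:R ->
  \sum_(k < l.+1) \sum_(T : {set 'I_k})
     (if [exists i, (i \in T) && (ordS i \notin T)] then
        q ^+ #|T| * \prod_(i < k) (#|Aset u W T i|%:R : R)
      else 0)
   <= (l.+1)%:R * ((#|W|%:R : R) ^+ 2 / n%:R) * (n%:R * q + 1) ^+ l.
Proof.
move=> q0 n0 Wn.
have a0 : (0 : R) < n%:R by rewrite ltr0n.
set K := (#|W|%:R : R) ^+ 2 / n%:R.
have K0 : 0 <= K by rewrite divr_ge0 // exprn_ge0.
have x0 : 0 <= n%:R * q by rewrite mulr_ge0.
rewrite -mulrA.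
have -> : (l.+1)%:R * (K * (n%:R * q + 1) ^+ l) = \sum_(k < l.+1) (K * (n%:R * q + 1) ^+ l).
  by rewrite sumr_const card_ord mulr_natl.
apply: ler_sum => k _.
apply: le_trans (_ : _ <= \sum_(T : {set 'I_k}) K * (n%:R * q) ^+ #|T|) _.
  apply: ler_sum => T _; case: ifP => ex; last by rewrite mulr_ge0 // exprn_ge0.
  apply: le_trans _ (cyc_prod (T := T) (a := n%:R) (bw := #|W|%:R) q0 a0 (ler0n _ _) Wn ex).
  rewrite ler_wpM2l ?exprn_ge0 // le_eqVlt; apply/orP; left; apply/eqP.
  apply: eq_bigr => i _; rewrite /Aset.
  case: ifP => _; first by rewrite cardsT card_ord.
  by case: ifP => _; rewrite ?cards1.
rewrite -mulr_sumr sum_pow_sets ler_wpM2l //.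
by apply: ler_weXn2l; [rewrite lerDr | rewrite -ltnS].
Qed.

Lemma Q_eq n l (E0 E1 : {set edge n}) (e : edge n) (H : {set edge n}) :
  e \notin E0 -> e \notin E1 ->
  ((E1 \subset H :|: [set e]) && (H :|: [set e] \subset ~: E0)
     && ~~ has_short_cycle l (H :|: [set e])) && [disjoint H & [set e]]
  = Om l E0 E1 e H && ~~ has_short_cycle l (e |: H).
Proof.
move=> eE0 eE1; rewrite (finset.setUC H) disjoint_sym disjoints1 /Om.
rewrite finset.subUset finset.sub1set inE eE0 /=.
have -> : (E1 \subset e |: H) = (E1 \subset H).
  apply/idP/idP => [/fsubsetP s|s].
    apply/fsubsetP => x xE1; move: (s x xE1); rewrite !inE => /orP[/eqP exe|//].
    by move: eE1; rewrite -exe xE1.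
  apply: fintype.subset_trans s _; exact: finset.subsetUr.
case: (E1 \subset H) => //=; case: (H \subset ~: E0) => //=.
case h1: (has_short_cycle l (e |: H)) => /=; first by rewrite andbF.
have -> : has_short_cycle l H = false.
  by apply/negbTE/negP => hH; move: (hsc_sub (finset.subsetUr [set e] H) hH); rewrite h1.
by rewrite andbC.
Qed.

Lemma main_fixed (R : realType) n l (lam : R) (E0 E1 : {set edge n}) (e : edge n)
    (eta : R) :
  (0 < n)%N -> 0 < lam / n%:R <= 2^-1 ->
  [disjoint E0 & E1] -> e \notin E0 -> e \notin E1 ->
  ~~ has_short_cycle l (e |: E1) ->
  (#|Wset e E1|%:R : R) ^+ 2 <= n%:R ->
  0 <= eta ->
  (l.+1)%:R * ((#|Wset e E1|%:R : R) ^+ 2 / n%:R) *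
     (n%:R * ((lam / n%:R) / (1 - lam / n%:R)) + 1) ^+ l <= eta ->
  let P := gtilde_cond l lam (fun G => e \in G)
                 (fun G => (E1 \subset G) && (G \subset ~: E0)) in
  (1 - eta) * (lam / n%:R) <= P /\ P <= lam / n%:R.
Proof.
move=> n0 /andP[p0 p2] dE eE0 eE1 nE1 Wn eta0 Heta P.
set p := lam / n%:R in p0 p2 Heta *.
have p02 : 0 <= p <= 2^-1 by rewrite ltW.
have p1 : p < 1 by lra.
have pn1 : p != 1 by rewrite lt_eqF.
set q := p / (1 - p).
have q0 : 0 <= q by rewrite /q divr_ge0 //; lra.
have qp : q * (1 - p) = p by rewrite /q divfK // subr_eq0 eq_sym.
have w0 (G : {set edge n}) : 0 <= gnp_weight p G by apply: w_ge0; rewrite ltW //= ltW.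
have E1ok : ~~ has_short_cycle l E1.
  by apply: contra nE1; apply: hsc_sub; exact: finset.subsetUr.
have wE1 : 0 < gnp_weight p E1 by apply: w_gt0; rewrite p0.
set T := \sum_(G | Om l E0 E1 e G) gnp_weight p G.
set T' := \sum_(G | Om l E0 E1 e G && ~~ has_short_cycle l (e |: G)) gnp_weight p G.
have T0 : 0 < T.
  apply: lt_le_trans wE1 _.
  apply: le_sum_term => [|G _]; last exact: w0.
  apply/and4P; split; [exact: fintype.subxx | | exact: E1ok | exact: eE1].
  by rewrite -finset.disjoints_subset disjoint_sym.
have hT' : T - T' <= eta * T.
  have -> : T - T' = \sum_(G | Om l E0 E1 e G && has_short_cycle l (e |: G))
     gnp_weight p G.
    rewrite /T (bigID (fun G => has_short_cycle l (e |: G))) /= /T'.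
    by rewrite addrK.
  apply: le_trans (bad_bound E0 p02 nE1) _.
  rewrite [X in _ <= X]mulrC ler_pM2l //.
  apply: le_trans _ Heta.
  exact: count_bound.
set SA := \sum_(G : {set edge n} | ((e \in G) && ((E1 \subset G) && (G \subset ~: E0)))
            && ~~ has_short_cycle l G) gnp_weight p G.
set SB := \sum_(G : {set edge n} | (E1 \subset G) && (G \subset ~: E0) && ~~ has_short_cycle l G)
            gnp_weight p G.
have eSA : SA = q * T'.
  rewrite /SA (eq_bigl (fun G : {set edge n} => ((E1 \subset G) && (G \subset ~: E0)
              && ~~ has_short_cycle l G) && ([set e] \subset G))); last first.
    move=> G; rewrite /= finset.sub1set.
    by case: (e \in G) (E1 \subset G) (G \subset ~: E0) (has_short_cycle l G) => [] [] [] [].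
  rewrite sum_super // cards1 expr1; congr (_ * _).
  by apply: eq_bigl => H; rewrite Q_eq.
have eSB : SB = SA + T.
  rewrite /SB (bigID (fun G : {set edge n} => e \in G)) /=; congr (_ + _).
    apply: eq_bigl => G.
    by case: (e \in G) (E1 \subset G) (G \subset ~: E0) (has_short_cycle l G) => [] [] [] [].
  apply: eq_bigl => G; rewrite /Om.
  by case: (e \in G) (E1 \subset G) (G \subset ~: E0) (has_short_cycle l G) => [] [] [] [].
pose Z := \sum_(G : {set edge n} | ~~ has_short_cycle l G) gnp_weight p G.
have Z0 : 0 < Z.
  apply: lt_le_trans wE1 _.
  by apply: le_sum_term => [|G _]; last exact: w0.
have eP : P = SA / SB.
  rewrite /P /gtilde_cond /gtilde_prob -/p -/Z -/SB.
  rewrite (eq_bigl (fun G : {set edge n} => (e \in G) && ((E1 \subset G) &&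
     (G \subset ~: E0)) && ~~ has_short_cycle l G)) // -/SA.
  have Z1 : Z != 0 by rewrite gt_eqF.
  have SB0 : SB != 0.
    rewrite eSB eSA gt_eqF // ltr_wpDl // mulr_ge0 //.
    by apply: sumr_ge0 => G _.
  by rewrite -mulf_div divff ?invr_neq0 // mulr1.
have SB0 : 0 < SB.
  rewrite eSB eSA ltr_wpDl // mulr_ge0 //.
  by apply: sumr_ge0 => G _.
have T'0 : 0 <= T' by apply: sumr_ge0 => G _.
have T'T : T' <= T.
  by apply: sum_mono_pred => [G /andP[]|G _] //.
have kq : q = p + p * q by rewrite -[X in _ = X + _]qp; ring.
rewrite eP; split; last first.
  rewrite ler_pdivrMr // eSB eSA {1}kq mulrDl mulrDr -mulrA addrC lerD2l.
  by rewrite ler_wpM2l // ltW.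
rewrite ler_pdivlMr // eSB eSA.
set A := q * T'.
set c := 1 - eta.
have [c0|c0] := leP c 0.
  apply: le_trans (_ : 0 <= A); last by rewrite mulr_ge0.
  have hA0 : 0 <= A by rewrite mulr_ge0.
  rewrite -mulrA; apply: mulr_le0_ge0 => //.
  by apply: mulr_ge0; [exact: ltW | apply: addr_ge0 => //; exact: ltW].
have c1 : c <= 1 by rewrite /c; lra.
have hA : q * c * T <= A.
  by rewrite /A -mulrA ler_wpM2l // /c; lra.
have cp1 : 0 <= 1 - c * p.
  rewrite subr_ge0; apply: le_trans (_ : c * 1 <= 1); last by rewrite mulr1.
  rewrite ler_wpM2l ?ltW //; lra.
have h2 : q * c * T * (1 - c * p) <= A * (1 - c * p) by rewrite ler_wpM2r.
have h3 : c * T * p <= q * c * T * (1 - c * p).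
  have : 0 <= c * T * (q * p * (1 - c)).
    apply: mulr_ge0; first by apply: mulr_ge0; apply: ltW.
    apply: mulr_ge0; first by apply: mulr_ge0 => //; apply: ltW.
    by rewrite subr_ge0.
  have -> : q * c * T * (1 - c * p) = c * T * p + c * T * (q * p * (1 - c)).
    have e0 : q - p - p * q = 0 by rewrite {1}kq; ring.
    apply/eqP; rewrite -subr_eq0.
    have -> : q * c * T * (1 - c * p) - (c * T * p + c * T * (q * p * (1 - c)))
      = c * T * (q - p - p * q) by ring.
    by rewrite e0 mulr0.
  lra.
nra.
Qed.

Lemma card_W n (e : edge n) (E1 : {set edge n}) :
  (#|Wset e E1| <= 2 * (#|E1| + 1))%N.
Proof.
set S := e |: E1.
have sub : Wset e E1 \subset (fun x : edge n => (val x).1) @: S :|: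
                                (fun x : edge n => (val x).2) @: S.
  apply/fsubsetP => a; rewrite inE => /existsP[x /andP[xS /orP[]/eqP <-]];
    rewrite inE; apply/orP; [left|right]; exact: imset_f.
apply: leq_trans (subset_leq_card sub) _.
apply: leq_trans (leq_card_setU _ _) _.
have cS : (#|S| <= #|E1| + 1)%N by rewrite /S cardsU1 addnC leq_add2l; case: (e \notin E1).
have := leq_imset_card (fun x : edge n => (val x).1) S.
have := leq_imset_card (fun x : edge n => (val x).2) S.
move=> h1 h2; apply: leq_trans (leq_add h2 h1) _.
by rewrite mul2n -addnn leq_add.
Qed.

Lemma powRE (R : realType) (a r : R) : 0 < a -> a `^ r = expR (r * ln a).
Proof. by move=> a0; rewrite /powR gt_eqF. Qed.

Lemma num_bound (R : realType) (lam N : R) (l : nat) (w e1 : R) :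
  0 < lam -> expR (32 * 48 * 48) <= N -> 2 * lam <= N ->
  l%:R <= (24 * (ln (2 * lam + 1) + 1))^-1 * ln N ->
  e1 <= N `^ 3^-1 -> 0 <= w <= 2 * e1 + 2 ->
  w ^+ 2 <= N /\
  (l.+1)%:R * (w ^+ 2 / N) * (N * ((lam / N) / (1 - lam / N)) + 1) ^+ l
    <= N `^ (- 4^-1).
Proof.
move=> lam0 hN h2 hl he1 /andP[w0 hw].
have N0 : 0 < N by apply: lt_le_trans hN; exact: expR_gt0.
set L := ln N.
have eN : N = expR L by rewrite /L lnK.
have eL : ln N = L by [].
clearbody L.
have L0 : 32 * 48 * 48 <= L by rewrite -ler_expR -eN.
have eps_pos : 0 <= ln (2 * lam + 1).
  by apply: ln_ge0; rewrite lerDr mulr_ge0 // ltW.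
set D := ln (2 * lam + 1).
have eD : D = ln (2 * lam + 1) by [].
clearbody D.
rewrite -eD in eps_pos; rewrite eL -eD in hl.
have eps1 : (24 * (D + 1))^-1 * D <= 24^-1.
  rewrite mulrC ler_pdivrMr; last by rewrite mulr_gt0 //; lra.
  rewrite mulrA mulVf // mul1r; lra.
have eps2 : (24 * (D + 1))^-1 <= 1.
  rewrite invf_le1; [lra | rewrite mulr_gt0 //; lra].
have ea : N `^ 3^-1 = expR (L / 3) by rewrite powRE // eL; congr expR; lra.
have e4 : N `^ (- 4^-1) = expR (- (L / 4)) by rewrite powRE // eL; congr expR; lra.
have a1 : 16 <= expR (L / 3).
  apply: le_trans (expR_ge1Dx _); lra.
have hw' : w <= 4 * expR (L / 3) by rewrite ea in he1; lra.
have hw2 : w ^+ 2 <= 16 * expR (L / 3) ^+ 2.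
  have : w ^+ 2 <= (4 * expR (L / 3)) ^+ 2 by rewrite ler_pXn2r // ?nnegrE //; lra.
  by rewrite exprMn; lra.
have eA2 : expR (L / 3) ^+ 2 * expR (L / 3) = N.
  by rewrite eN -expRM_natr -expRD; congr expR; lra.
split.
  apply: le_trans hw2 _; rewrite -eA2.
  rewrite mulrC ler_wpM2l ?exprn_ge0 ?expR_ge0 //.
have p2 : lam / N <= 2^-1.
  by rewrite ler_pdivrMr // mulrC ler_pdivlMr //; lra.
have p0 : 0 < lam / N by rewrite divr_gt0.
have hq : N * ((lam / N) / (1 - lam / N)) + 1 <= 2 * lam + 1.
  rewrite lerD2r mulrA mulrCA divff ?gt_eqF // mulr1.
  rewrite ler_pdivrMr; last by lra.
  have : lam / N * N = lam by rewrite divfK ?gt_eqF.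
  nra.
have hD : (N * ((lam / N) / (1 - lam / N)) + 1) ^+ l <= expR (L / 24).
  apply: le_trans (_ : (2 * lam + 1) ^+ l <= _).
    apply: lerXn2r; rewrite ?nnegrE.
    + apply: addr_ge0 => //; apply: mulr_ge0; first exact: ltW.
      by apply: divr_ge0; [exact: ltW | lra].
    + lra.
    + exact: hq.
  rewrite -[2 * lam + 1]lnK ?posrE; last by lra.
  rewrite -expRM_natl ler_expR -eD.
  apply: le_trans (_ : (24 * (D + 1))^-1 * L * D <= _); first by apply: ler_wpM2r.
  rewrite mulrAC; apply: le_trans (_ : 24^-1 * L <= _); last by lra.
  by apply: ler_wpM2r => //; lra.
have hl1 : (l.+1)%:R <= L + 1.
  rewrite -addn1 natrD lerD2r; apply: le_trans hl _.
  by rewrite -[X in _ <= X]mul1r ler_wpM2r //; lra.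
have hexp : 16 * (L + 1) <= expR (L / 24).
  have e2 : expR (L / 24) = expR (L / 48) ^+ 2.
    by rewrite -expRM_natr; congr expR; lra.
  have h48 : 1 + L / 48 <= expR (L / 48) by exact: expR_ge1Dx.
  have : (1 + L / 48) ^+ 2 <= expR (L / 48) ^+ 2.
    by rewrite ler_pXn2r ?nnegrE //; lra.
  rewrite e2; nra.
rewrite e4.
have hWN : w ^+ 2 / N <= 16 * expR (- (L / 3)).
  rewrite ler_pdivrMr // -eA2.
  apply: le_trans hw2 _.
  rewrite -mulrA ler_wpM2l //.
  have : expR (- (L / 3)) * expR (L / 3) = 1 by rewrite -expRD addNr expR0.
  move=> ea1.
  have -> : expR (- (L / 3)) * (expR (L / 3) ^+ 2 * expR (L / 3)) =
     expR (L / 3) ^+ 2 * (expR (- (L / 3)) * expR (L / 3)) by ring.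
  by rewrite ea1 mulr1.
have hprod : (l.+1)%:R * (w ^+ 2 / N) *
    (N * (lam / N / (1 - lam / N)) + 1) ^+ l <=
    (L + 1) * (16 * expR (- (L / 3))) * expR (L / 24).
  apply: ler_pM => //.
  - by rewrite mulr_ge0 ?divr_ge0 ?exprn_ge0 // ltW.
  - apply: exprn_ge0; apply: addr_ge0 => //; apply: mulr_ge0; first exact: ltW.
    by apply: divr_ge0; [exact: ltW | lra].
  - apply: ler_pM => //; by rewrite ?divr_ge0 ?exprn_ge0 // ltW.
apply: le_trans hprod _.
have -> : (L + 1) * (16 * expR (- (L / 3))) * expR (L / 24)
   = (16 * (L + 1)) * expR (- (L / 3) + L / 24).
  by rewrite expRD; ring.
have -> : expR (- (L / 4)) = expR (L / 24) * expR (- (L / 3) + L / 24).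
  by rewrite -expRD; congr expR; lra.
by rewrite ler_wpM2r // expR_ge0.
Qed.

Theorem lemma6 (R : realType) (lam : R) (ell : nat -> nat) :
  0 < lam ->
  (* ell(n) = o(log n) *)
  (forall eps : R, 0 < eps ->
     \forall n \near eventually, ((ell n)%:R <= eps * ln (n%:R : R))) ->
  \forall n \near eventually,
    forall (E0 E1 : {set edge n}) (e : edge n),
      [disjoint E0 & E1] -> e \notin E0 -> e \notin E1 ->
      (#|E1|%:R <= (n%:R : R) `^ (3^-1)) ->
      ~~ has_short_cycle (ell n) (e |: E1) ->
      let P := gtilde_cond (ell n) lam
                 (fun G => e \in G)
                 (fun G => (E1 \subset G) && (G \subset ~: E0)) in
      (1 - (n%:R : R) `^ (- 4^-1)) * (lam / n%:R) <= P /\ P <= lam / n%:R.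
Proof.
move=> lam0 hell.
have eps0 : 0 < (24 * (ln (2 * lam + 1) + 1))^-1.
  have : 0 <= ln (2 * lam + 1) by apply: ln_ge0; rewrite lerDr mulr_ge0 // ltW.
  by move=> h; rewrite invr_gt0 mulr_gt0 //; lra.
have H1 := hell _ eps0.
have H2 := nbhs_infty_ger (2 * lam).
have H3 := nbhs_infty_ger (expR (32 * 48 * 48) : R).
move: H1 H2 H3; apply: filterS3 => n hl h2 h3 E0 E1 e dE eE0 eE1 hE1 nE1.
have N0 : (0 : R) < n%:R by apply: lt_le_trans (expR_gt0 _) h3.
have n0 : (0 < n)%N by rewrite -(ltr0n R).
have hw : 0 <= (#|Wset e E1|%:R : R) <= 2 * #|E1|%:R + 2.
  rewrite ler0n /=; have := card_W e E1; rewrite -(ler_nat R) natrM natrD.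
  by move=> h; apply: le_trans h _; lra.
have [Wn hb] := num_bound lam0 h3 h2 hl hE1 hw.
apply: main_fixed => //.
- rewrite divr_gt0 //=; rewrite ler_pdivrMr // mulrC ler_pdivlMr //; lra.
Qed.
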